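(* If the NNF DAG of $F$ is in wDNNF, then for every $j\in\{1,\ldots,n\}$ the implication $$\hat F(\mathbf{1}^j,\mathbf{X}_{j+1}^n,\mathbf{1}^j,\overline{\mathbf{X}}_{j+1}^n,\mathbf{Y})\Rightarrow \hat F(\mathbf{1}^{j-1}0,\mathbf{X}_{j+1}^n,\mathbf{1}^{j-1}1,\overline{\mathbf{X}}_{j+1}^n,\mathbf{Y})\vee \hat F(\mathbf{1}^{j-1}1,\mathbf{X}_{j+1}^n,\mathbf{1}^{j-1}0,\overline{\mathbf{X}}_{j+1}^n,\mathbf{Y})$$ is valid (for all values of $\mathbf{X}_{j+1}^n,\overline{\mathbf{X}}_{j+1}^n,\mathbf{Y}$).
   Context: $\mathbf{X}=(x_1,\ldots,x_n)$ are outputs and $\mathbf{Y}=(y_1,\ldots,y_m)$ inputs; $\mathbf{X}_i^j=(x_i,\ldots,x_j)$. An NNF formula uses only $\wedge,\vee$ and negations applied to variables, represented as a rooted DAG with $\wedge/\vee$ internal nodes and literal leaves. For an internal node representing subformula $\alpha$, $\mathrm{lits}(\alpha)$ is the set of literals labeling leaves having a path to that node. The NNF DAG is in wDNNF if for every $\wedge$-node representing $\alpha=\alpha_1\wedge\cdots\wedge\alpha_k$ there is no literal $l$ and distinct $p,q$ with $l\in\mathrm{lits}(\alpha_p)$ and $\neg l\in\mathrm{lits}(\alpha_q)$. $\hat F(\mathbf{X},\overline{\mathbf{X}},\mathbf{Y})$ is obtained from the NNF DAG of $F$ by replacing each leaf $\neg x_i$ ($x_i\in\mathbf{X}$) by a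 fresh variable $\overline{x_i}$. For length-$j$ bit-vectors $\mathbf{b},\mathbf{c}$, $\hat F(\mathbf{b},\mathbf{X}_{j+1}^n,\mathbf{c},\overline{\mathbf{X}}_{j+1}^n,\mathbf{Y})$ sets $(x_1,\ldots,x_j):=\mathbf{b}$ and $(\overline{x_1},\ldots,\overline{x_j}):=\mathbf{c}$. $\mathbf{1}^{j-1}0$ is $j-1$ ones followed by $0$; $\mathbf{1}^{j-1}1=\mathbf{1}^j$ is all ones. *)

(* Defs.v *)
From mathcomp Require Import all_boot.
Set Implicit Arguments. Unset Strict Implicit. Unset Printing Implicit Defensive.

(* A literal is (isX, index, positive):
   - (true,  i, true)  is x_{i+1},   (true,  i, false) is ~ x_{i+1}   (outputs X, 0-based index)
   - (false, i, true)  is y_{i+1},   (false, i, false) is ~ y_{i+1}   (inputs Y) *)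
Definition literal := (bool * nat * bool)%type.

Definition neg_lit (l : literal) : literal := (l.1.1, l.1.2, ~~ l.2).

(* A rooted NNF DAG is represented by its tree unfolding (same lits sets,
   same semantics, same wDNNF condition at each AND node). *)
Inductive nnf : Type :=
| NLit of bool & nat & bool
| NAnd of seq nnf
| NOr  of seq nnf.

Fixpoint lits (f : nnf) : seq literal :=
  match f with
  | NLit b i p => [:: (b, i, p)]
  | NAnd fs => flatten (map lits fs)
  | NOr fs => flatten (map lits fs)
  end.

Fixpoint xvars_below (n : nat) (f : nnf) : bool :=
  match f with
  | NLit b i _ => b ==> (i < n)
  | NAnd fs => all (xvars_below n) fs
  | NOr fs => all (xvars_below n) fs
  end.

Definition and_ok (fs : seq nnf) : bool :=
  [forall p : 'I_(size fs), forall q : 'I_(size fs),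
     (p != q) ==>
     ~~ has (fun l => neg_lit l \in lits (nth (NOr [::]) fs q))
            (lits (nth (NOr [::]) fs p))].

Fixpoint wDNNF (f : nnf) : bool :=
  match f with
  | NLit _ _ _ => true
  | NAnd fs => all wDNNF fs && and_ok fs
  | NOr fs => all wDNNF fs
  end.

(* Evaluation of F-hat(X, Xbar, Y): leaf ~x_i is replaced by the fresh
   variable xbar_i; Y-literals keep their usual meaning. *)
Fixpoint eval_hat (ax axb ay : nat -> bool) (f : nnf) : bool :=
  match f with
  | NLit true i true => ax i
  | NLit true i false => axb i
  | NLit false i p => if p then ay i else ~~ ay i
  | NAnd fs => all (eval_hat ax axb ay) fs
  | NOr fs => has (eval_hat ax axb ay) fs
  end.

Definition set_prefix (j : nat) (b a : nat -> bool) : nat -> bool :=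
  fun i => if i < j then b i else a i.

Definition ones : nat -> bool := fun _ => true.
(* the bit-vector 1^{j-1}0 (0-based: position j-1 is 0) *)
Definition ones_then_zero (j : nat) : nat -> bool := fun i => i != j.-1.

(* Main.v *)
Require Import Defs.
From mathcomp Require Import all_boot.

Fixpoint allP (Q : nnf -> Prop) (fs : seq nnf) : Prop :=
  match fs with nil => True | f :: fs => Q f /\ allP Q fs end.

Section Ind.
Variable Q : nnf -> Prop.
Hypothesis HL : forall b i p, Q (NLit b i p).
Hypothesis HA : forall fs, allP Q fs -> Q (NAnd fs).
Hypothesis HO : forall fs, allP Q fs -> Q (NOr fs).
Fixpoint nnf_ind' (f : nnf) : Q f :=
  match f with
  | NLit b i p => HL b i p
  | NAnd fs => @HA fs ((fix g (l : seq nnf) : allP Q l :=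
       match l with nil => I | x :: l' => conj (nnf_ind' x) (g l') end) fs)
  | NOr fs => @HO fs ((fix g (l : seq nnf) : allP Q l :=
       match l with nil => I | x :: l' => conj (nnf_ind' x) (g l') end) fs)
  end.
End Ind.

Lemma allP_nth Q fs i : allP Q fs -> i < size fs -> Q (nth (NOr [::]) fs i).
Proof.
elim: fs i => [|f fs IH] [|i] //= [H1 H2] Hi; first by [].
by apply: IH.
Qed.

Lemma eval_ext a1 b1 a2 b2 ay f :
  (forall b i p, (b, i, p) \in lits f ->
     eval_hat a1 b1 ay (NLit b i p) = eval_hat a2 b2 ay (NLit b i p)) ->
  eval_hat a1 b1 ay f = eval_hat a2 b2 ay f.
Proof.
elim/nnf_ind': f.
- by move=> b i p H; apply: H; rewrite mem_seq1.
- move=> fs IH H /=. elim: fs IH H => [|f fs IHl] //= [Hf Hfs] H.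
  rewrite Hf; last by move=> b i p Hm; apply: H; rewrite mem_cat Hm.
  by rewrite IHl // => b i p Hm; apply: H; rewrite mem_cat Hm orbT.
- move=> fs IH H /=. elim: fs IH H => [|f fs IHl] //= [Hf Hfs] H.
  rewrite Hf; last by move=> b i p Hm; apply: H; rewrite mem_cat Hm.
  by rewrite IHl // => b i p Hm; apply: H; rewrite mem_cat Hm orbT.
Qed.

Lemma evalAB j ax axb ay f : (true, j.-1, true) \notin lits f ->
  eval_hat (set_prefix j (ones_then_zero j) ax) (set_prefix j ones axb) ay f
  = eval_hat (set_prefix j ones ax) (set_prefix j ones axb) ay f.
Proof.
move=> Hn; apply: eval_ext => b i p Hm.
case: b Hm => //; case: p => // Hm /=.
rewrite /set_prefix /ones_then_zero /ones; case: (i < j) => //.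
by apply/eqP => E; move: Hn; rewrite -E Hm.
Qed.

Lemma evalAC j ax axb ay f : (true, j.-1, false) \notin lits f ->
  eval_hat (set_prefix j ones ax) (set_prefix j (ones_then_zero j) axb) ay f
  = eval_hat (set_prefix j ones ax) (set_prefix j ones axb) ay f.
Proof.
move=> Hn; apply: eval_ext => b i p Hm.
case: b Hm => //; case: p => // Hm /=.
rewrite /set_prefix /ones_then_zero /ones; case: (i < j) => //.
by apply/eqP => E; move: Hn; rewrite -E Hm.
Qed.

Lemma and_ok_NP fs k a b : and_ok fs -> a < size fs -> b < size fs ->
  (true, k, false) \in lits (nth (NOr [::]) fs a) ->
  (true, k, true) \in lits (nth (NOr [::]) fs b) -> a = b.
Proof.
move=> /forallP Hok Ha Hb Hn Hp.
have := Hok (Ordinal Ha) => /forallP /(_ (Ordinal Hb)) /implyP H.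
apply/eqP; apply: contraTT isT => Hne.
have /negP := H Hne; case; apply/hasP; exists (true, k, false) => //.
Qed.

Theorem mainTheorem8 (n : nat) (F : nnf) :
  xvars_below n F -> wDNNF F ->
  forall j : nat, 1 <= j <= n ->
  forall ax axb ay : nat -> bool,
    eval_hat (set_prefix j ones ax) (set_prefix j ones axb) ay F ->
    eval_hat (set_prefix j (ones_then_zero j) ax) (set_prefix j ones axb) ay F
    || eval_hat (set_prefix j ones ax) (set_prefix j (ones_then_zero j) axb) ay F.
Proof.
move=> _ HW j _ ax axb ay.
set eA := eval_hat (set_prefix j ones ax) (set_prefix j ones axb) ay.
set eB := eval_hat (set_prefix j (ones_then_zero j) ax) (set_prefix j ones axb) ay.
set eC := eval_hat (set_prefix j ones ax) (set_prefix j (ones_then_zero j) axb) ay.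
set P := (true, j.-1, true). set N := (true, j.-1, false).
have AB f : P \notin lits f -> eB f = eA f by apply: evalAB.
have AC f : N \notin lits f -> eC f = eA f by apply: evalAC.
move: HW; elim/nnf_ind': F.
- move=> b i p _ HA.
  case E: ((b, i, p) == N).
  + rewrite AB ?HA //; rewrite mem_seq1 (eqP E) /P /N.
    by apply/negP => /eqP [].
  + by rewrite AC ?HA ?orbT // mem_seq1 eq_sym E.
- move=> fs IH /= /andP [Hw Hok] /all_nthP HA.
  set x0 := NOr [::].
  case hN: (has (fun f => N \in lits f) fs); last first.
    apply/orP; right; apply/(all_nthP x0) => i Hi.
    change (eC (nth x0 fs i)); rewrite AC; first exact: HA. apply: contraFN hN => Hm.
    by apply/(has_nthP x0); exists i.
  case hP: (has (fun f => P \in lits f) fs); last first.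
    apply/orP; left; apply/(all_nthP x0) => i Hi.
    change (eB (nth x0 fs i)); rewrite AB; first exact: HA. apply: contraFN hP => Hm.
    by apply/(has_nthP x0); exists i.
  move/(has_nthP x0): hN => [q Hq HqN].
  move/(has_nthP x0): hP => [p Hp HpP].
  have Epq := @and_ok_NP _ _ _ _ Hok Hq Hp HqN HpP. subst q.
  have := @allP_nth _ _ _ IH Hp.
  move/(_ (all_nthP x0 Hw p Hp) (HA x0 p Hp)) => /orP [Hb|Hc].
  + apply/orP; left; apply/(all_nthP x0) => i Hi.
    case: (eqVneq i p) => [->//|Hne].
    change (eB (nth x0 fs i)); rewrite AB; first exact: HA. apply/negP => Hm.
    by move: Hne; rewrite (@and_ok_NP _ _ _ _ Hok Hp Hi HqN Hm) eqxx.
  + apply/orP; right; apply/(all_nthP x0) => i Hi.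
    case: (eqVneq i p) => [->//|Hne].
    change (eC (nth x0 fs i)); rewrite AC; first exact: HA. apply/negP => Hm.
    by move: Hne; rewrite (@and_ok_NP _ _ _ _ Hok Hi Hp Hm HpP) eqxx.
- move=> fs IH /= Hw /(has_nthP (NOr [::])) [i Hi HAi].
  have := @allP_nth _ _ _ IH Hi.
  move/(_ (all_nthP (NOr [::]) Hw i Hi) HAi) => /orP [Hb|Hc].
  + by apply/orP; left; apply/(has_nthP (NOr [::])); exists i.
  + by apply/orP; right; apply/(has_nthP (NOr [::])); exists i.
Qed.
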